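(* For all integers $n$ and $\alpha$ with $n<\alpha\le 2^{n-2}+2$, there exists a minimal $n$-state nondeterministic finite automaton accepting an infix-free language whose equivalent minimal deterministic finite automaton has exactly $\alpha$ states.
   Context: NFAs have a single initial state and a transition function $\delta:Q\times\Sigma\to 2^Q$ that may map to the empty set (no sink state is needed or counted); DFAs are complete, so a sink state is counted. A minimal $n$-state NFA is an NFA with $n$ states such that no NFA with fewer states accepts the same language. A language $L\subseteq\Sigma^*$ is infix-free if $y\in L$ implies $xyz\notin L$ for all $x,z\in\Sigma^*$ with $xz\neq\lambda$ ($\lambda$ the empty word). *)

(* Defs.v *)
From mathcomp Require Import all_boot.
Set Implicit Arguments. Unset Strict Implicit. Unset Printing Implicit Defensive.

(* Words over a finite alphabet Sigma are sequences [seq Sigma]; the empty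
   word lambda is [::]. *)

(* NFA: single initial state, transition function Q x Sigma -> 2^Q
   (possibly empty; no sink state needed). *)
Record nfa (Sigma Q : finType) := Nfa {
  nfa_start : Q;
  nfa_delta : Q -> Sigma -> {set Q};
  nfa_final : {set Q} }.

Definition nfa_step (Sigma Q : finType) (A : nfa Sigma Q) (S : {set Q}) (a : Sigma)
  : {set Q} := \bigcup_(q in S) nfa_delta A q a.

Definition nfa_accepts (Sigma Q : finType) (A : nfa Sigma Q) (w : seq Sigma) : bool :=
  [exists q in foldl (nfa_step A) [set nfa_start A] w, q \in nfa_final A].

(* Complete DFA: total transition function (sink states are counted). *)
Record dfa (Sigma Q : finType) := Dfa {
  dfa_start : Q;
  dfa_delta : Q -> Sigma -> Q;
  dfa_final : {set Q} }.

Definition dfa_accepts (Sigma Q : finType) (D : dfa Sigma Q) (w : seq Sigma) : bool :=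
  foldl (dfa_delta D) (dfa_start D) w \in dfa_final D.

Definition nfa_lang (Sigma Q : finType) (A : nfa Sigma Q) : seq Sigma -> bool :=
  nfa_accepts A.
Definition dfa_lang (Sigma Q : finType) (D : dfa Sigma Q) : seq Sigma -> bool :=
  dfa_accepts D.

Definition minimal_nfa (Sigma Q : finType) (A : nfa Sigma Q) : Prop :=
  forall (Q' : finType) (B : nfa Sigma Q'),
    (forall w, nfa_accepts B w = nfa_accepts A w) -> #|Q| <= #|Q'|.

Definition min_dfa_size (Sigma : finType) (L : seq Sigma -> bool) (alpha : nat) : Prop :=
  (exists (Q : finType) (D : dfa Sigma Q), #|Q| = alpha /\ forall w, dfa_accepts D w = L w)
  /\ (forall (Q : finType) (D : dfa Sigma Q), (forall w, dfa_accepts D w = L w) -> alpha <= #|Q|).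

Definition infix_free (Sigma : finType) (L : seq Sigma -> bool) : Prop :=
  forall x y z : seq Sigma, L y -> x ++ z != [::] -> ~~ L (x ++ y ++ z).

(* Main.v *)
Require Import Defs.
From mathcomp Require Import all_boot.
From mathcomp Require Import zify.
Set Implicit Arguments. Unset Strict Implicit. Unset Printing Implicit Defensive.

Section Gen.
Variables (Sigma Q : finType).
Implicit Types (A : nfa Sigma Q).

Definition acc A (X : {set Q}) w :=
  [exists q in foldl (nfa_step A) X w, q \in nfa_final A].

Lemma step_mono A (X Y : {set Q}) a : X \subset Y -> nfa_step A X a \subset nfa_step A Y a.
Proof.
move=> /subsetP XY; apply/subsetP => q /bigcupP [p pX qp].
by apply/bigcupP; exists p => //; apply: XY.
Qed.

Lemma foldl_mono A (X Y : {set Q}) w : X \subset Y ->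
  foldl (nfa_step A) X w \subset foldl (nfa_step A) Y w.
Proof.
elim: w X Y => [//|a w IH] X Y XY /=; apply: IH; exact: step_mono.
Qed.

Lemma acc_mono A (X Y : {set Q}) w : X \subset Y -> acc A X w -> acc A Y w.
Proof.
move=> XY /existsP [q /andP [qX qF]]; apply/existsP; exists q.
by rewrite qF andbT; apply: (subsetP (foldl_mono A w XY)).
Qed.

Lemma foldl_split A (X : {set Q}) w q : q \in foldl (nfa_step A) X w ->
  exists2 p, p \in X & q \in foldl (nfa_step A) [set p] w.
Proof.
elim: w X => [|a w IH] X /=; first by move=> qX; exists q; rewrite ?set11.
move=> /IH [p' /bigcupP [p pX p'p] qp']; exists p => //.
apply: (subsetP (foldl_mono A w _)) qp'.
rewrite sub1set; apply/bigcupP; exists p => //; exact: set11.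
Qed.

Lemma acc_split A (X : {set Q}) w : acc A X w -> exists2 p, p \in X & acc A [set p] w.
Proof.
move=> /existsP [q /andP [/foldl_split [p pX qp] qF]]; exists p => //.
by apply/existsP; exists q; rewrite qp.
Qed.

Lemma acc_cat A X u v : acc A X (u ++ v) = acc A (foldl (nfa_step A) X u) v.
Proof. by rewrite /acc foldl_cat. Qed.

Lemma acc_cons A X a w : acc A X (a :: w) = acc A (nfa_step A X a) w.
Proof. by []. Qed.

Lemma accepts_acc A w : nfa_accepts A w = acc A [set nfa_start A] w.
Proof. by []. Qed.

End Gen.

Section Fool.
Variables (Sigma Q : finType) (A : nfa Sigma Q) (x y : Q -> seq Sigma).
Hypothesis H1 : forall q, foldl (nfa_step A) [set nfa_start A] (x q) = [set q].
Hypothesis H2 : forall X q, acc A X (y q) = (q \in X).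

Lemma LA p q : nfa_accepts A (x p ++ y q) = (p == q).
Proof. by rewrite accepts_acc acc_cat H1 H2 in_set1 eq_sym. Qed.

Lemma fool : minimal_nfa A.
Proof.
move=> Q' B eqB.
pose P q r := (r \in foldl (nfa_step B) [set nfa_start B] (x q)) && acc B [set r] (y q).
have exP q : exists r, P q r.
  have : nfa_accepts B (x q ++ y q) by rewrite eqB LA.
  rewrite accepts_acc acc_cat => /acc_split [r r1 r2]; exists r; exact/andP.
pose g q := odflt (nfa_start B) [pick r | P q r].
have Pg q : P q (g q).
  rewrite /g; case: pickP => //= none; have [r Pr] := exP q; by rewrite none in Pr.
apply: (@leq_card _ _ g) => p q gpq.
have /andP [rp _] := Pg p; have /andP [_ rq] := Pg q.
rewrite gpq in rp.
apply/eqP; rewrite -LA -eqB accepts_acc acc_cat.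
by apply: acc_mono rq; rewrite sub1set.
Qed.

Variables (R : {set {set Q}}) (wR : {set Q} -> seq Sigma).
Hypothesis R1 : [set nfa_start A] \in R.
Hypothesis R2 : forall X a, X \in R -> nfa_step A X a \in R.
Hypothesis R3 : forall X, X \in R -> foldl (nfa_step A) [set nfa_start A] (wR X) = X.

Definition RT := {X : {set Q} | X \in R}.
Definition rdelta (X : RT) (a : Sigma) : RT := exist _ (nfa_step A (val X) a) (R2 a (valP X)).
Definition rdfa : dfa Sigma RT := Dfa (exist _ [set nfa_start A] R1) rdelta
   [set X : RT | [exists q in val X, q \in nfa_final A]].

Lemma rdfa_fold (X : RT) w : val (foldl rdelta X w) = foldl (nfa_step A) (val X) w.
Proof. by elim: w X => [|a w IH] X //=; rewrite IH. Qed.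

Lemma min_dfa : min_dfa_size (nfa_lang A) #|R|.
Proof.
split.
  exists RT, rdfa; split.
    by rewrite card_sig; apply: eq_card.
  move=> w; rewrite /dfa_accepts /nfa_lang accepts_acc /acc inE.
  by rewrite rdfa_fold.
move=> QD D eqD.
pose h X := foldl (dfa_delta D) (dfa_start D) (wR X).
rewrite -(card_in_imset (f := h)); first exact: max_card.
move=> X Y XR YR hXY; apply/setP => q.
rewrite -!H2 -(R3 XR) -(R3 YR) -!acc_cat -!accepts_acc.
have -> : nfa_accepts A (wR X ++ y q) = dfa_accepts D (wR X ++ y q) by rewrite eqD.
have -> : nfa_accepts A (wR Y ++ y q) = dfa_accepts D (wR Y ++ y q) by rewrite eqD.
by rewrite /dfa_accepts !foldl_cat -/(h X) -/(h Y) hXY.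
Qed.

Variable k : nat.
Hypothesis H4 : forall w, nfa_accepts A w -> size w = k.

Lemma infix_gen : infix_free (nfa_lang A).
Proof.
move=> u v z /H4 Hv uz; apply/negP => /H4.
rewrite !size_cat Hv => e.
move: uz; rewrite -size_eq0 size_cat; apply/negP; rewrite negbK; apply/eqP.
by move: e; rewrite addnCA -{2}[k]addn0 => /addnI.
Qed.

End Fool.

Lemma pack (Sigma Q : finType) (A : nfa Sigma Q) (x y : Q -> seq Sigma)
  (R : {set {set Q}}) (wR : {set Q} -> seq Sigma) (k : nat) :
  (forall q, foldl (nfa_step A) [set nfa_start A] (x q) = [set q]) ->
  (forall X q, acc A X (y q) = (q \in X)) ->
  [set nfa_start A] \in R ->
  (forall X a, X \in R -> nfa_step A X a \in R) ->
  (forall X, X \in R -> foldl (nfa_step A) [set nfa_start A] (wR X) = X) ->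
  (forall w, nfa_accepts A w -> size w = k) ->
  minimal_nfa A /\ infix_free (nfa_lang A) /\ min_dfa_size (nfa_lang A) #|R|.
Proof.
move=> H1 H2 R1 R2 R3 H4; split; first exact: (fool H1 H2).
split; first exact: (infix_gen H4).
exact: (min_dfa H2 R1 R2 R3).
Qed.

Lemma acc_nil (Sigma Q : finType) (A : nfa Sigma Q) X :
  acc A X [::] = [exists q in X, q \in nfa_final A].
Proof. by []. Qed.

Section Big.
Variables (k : nat) (j0 : 'I_k) (F : {set {set 'I_k}}).
Hypothesis F1 : forall i, [set i] \in F.
Hypothesis F0 : set0 \notin F.

Local Notation BQ := ('I_k + bool)%type.
Local Notation BS := ({set 'I_k} + 'I_k)%type.
Definition sS : BQ := inr false.
Definition sF : BQ := inr true.
Definition lift (T : {set 'I_k}) : {set BQ} := [set (@inl 'I_k bool) i | i in T].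

Definition bdelta (q : BQ) (a : BS) : {set BQ} :=
  match q, a with
  | inr false, inl T => if T \in F then lift T else set0
  | inl i, inr j => if i == j then [set sF] else set0
  | _, _ => set0
  end.

Definition BA : nfa BS BQ := Nfa sS bdelta [set sF].

Lemma stepL X T : nfa_step BA X (inl T) = if (sS \in X) && (T \in F) then lift T else set0.
Proof.
apply/setP => q; apply/bigcupP/idP => [[p pX]|].
  case: p pX => [i|[]] pX //=; rewrite ?inE //.
  by rewrite pX.
case: ifP => [/andP [sX TF] qT|]; last by rewrite inE.
by exists sS => //=; rewrite TF.
Qed.

Lemma stepR X j : nfa_step BA X (inr j) = if inl j \in X then [set sF] else set0.
Proof.
apply/setP => q; apply/bigcupP/idP => [[p pX]|].
  case: p pX => [i|[]] pX //=; rewrite ?inE //.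
  by case: eqP pX => [-> -> //|]; rewrite inE.
case: ifP => [jX qF|]; last by rewrite inE.
by exists (inl j) => //=; rewrite eqxx.
Qed.

Lemma acc0 X : acc BA X [::] = (sF \in X).
Proof.
apply/existsP/idP => [[q /andP [qX]]|sX]; first by rewrite inE => /eqP <-.
by exists sF; rewrite sX inE eqxx.
Qed.

Definition bx (q : BQ) : seq BS :=
  match q with inl i => [:: inl [set i]] | inr false => [::] | inr true => [:: inl [set j0]; inr j0] end.
Definition by_ (q : BQ) : seq BS :=
  match q with inl i => [:: inr i] | inr false => [:: inl [set j0]; inr j0] | inr true => [::] end.

Lemma lift1 i : lift [set i] = [set inl i].
Proof. by rewrite /lift imset_set1. Qed.

Lemma bH1 q : foldl (nfa_step BA) [set nfa_start BA] (bx q) = [set q].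
Proof.
case: q => [i|[]] /=; rewrite ?stepL ?in_set1 ?eqxx ?F1 ?lift1 //=.
by rewrite stepR in_set1 eqxx.
Qed.


Lemma acc0' : acc BA set0 [::] = false.
Proof. by rewrite acc0 inE. Qed.

Lemma bH2 X q : acc BA X (by_ q) = (q \in X).
Proof.
case: q => [i|[]]; rewrite /by_ ?acc_cons.
- by rewrite stepR; case: ifP => _; rewrite ?acc0 ?inE ?eqxx.
- exact: acc0.
- rewrite stepL F1 andbT; case: (sS \in X); rewrite ?lift1 stepR ?inE ?eqxx ?acc0 ?inE ?eqxx //.
Qed.

Definition BR : {set {set BQ}} := [set [set sS]; [set sF]; set0] :|: [set lift T | T in F].

Lemma BR_step (X : {set BQ}) (a : BS) : nfa_step BA X a \in BR.
Proof.
case: a => [T|j]; rewrite ?stepL ?stepR.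
  case: ifP => [/andP [_ TF]|_]; last by rewrite !inE eqxx !orbT.
  by rewrite in_setU imset_f ?orbT.
by case: ifP => _; rewrite !inE eqxx !orbT.
Qed.

Lemma BR1 : [set sS] \in BR.
Proof. by rewrite !inE eqxx. Qed.

Lemma notin_lift b T : inr b \notin lift T.
Proof. by apply/imsetP => -[i _]. Qed.

Lemma lift_pre T : [set i | inl i \in lift T] = T.
Proof. by apply/setP => i; rewrite inE mem_imset //; move=> ? ? [->]. Qed.

Definition wR (X : {set BQ}) : seq BS :=
  if sS \in X then [::] else if sF \in X then bx sF
  else if X == set0 then [:: inr j0] else [:: inl [set i | inl i \in X]].

Lemma BR3 X : X \in BR -> foldl (nfa_step BA) [set nfa_start BA] (wR X) = X.
Proof.
case/setUP => [|/imsetP [T TF ->]].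
  rewrite !inE => /orP [/orP [] | ] /eqP ->; rewrite /wR ?inE //=.
  - by rewrite stepL inE eqxx F1 lift1 stepR inE eqxx.
  - by rewrite eqxx /= stepR inE.
rewrite /wR (negbTE (notin_lift _ _)) (negbTE (notin_lift _ _)) imset_eq0.
have -> : (T == set0) = false by apply/negP => /eqP T0; move: F0; rewrite -T0 TF.
by rewrite lift_pre /= stepL inE eqxx TF.
Qed.

Lemma card_BR : #|BR| = 3 + #|F|.
Proof.
rewrite cardsU.
have -> : [set [set sS]; [set sF]; set0] :&: [set lift T | T in F] = set0.
  apply/setP => X; rewrite !inE; apply/negP => /andP [H /imsetP [T TF eX]].
  move: H; rewrite eX => /orP [/orP [] | ] /eqP.
  - by move/setP/(_ sS); rewrite inE eqxx (negbTE (notin_lift _ _)).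
  - by move/setP/(_ sF); rewrite inE eqxx (negbTE (notin_lift _ _)).
  - by move/eqP; rewrite imset_eq0 => /eqP T0; move: F0; rewrite -T0 TF.
rewrite cards0 subn0 card_imset; last by apply: imset_inj => ? ? [].
have h1 : ([set sS] == [set sF]) = false by apply/negP => /eqP/setP/(_ sS); rewrite !inE.
have h2 : (set0 == [set sS]) = false by apply/negP => /eqP/setP/(_ sS); rewrite !inE.
have h3 : (set0 == [set sF]) = false by apply/negP => /eqP/setP/(_ sF); rewrite !inE.
by rewrite setUC cardsU1 cards2 !inE h1 h2 h3.
Qed.

Lemma noS (X : {set BQ}) (a : BS) : sS \notin nfa_step BA X a.
Proof.
case: a => [T|j]; rewrite ?stepL ?stepR; case: ifP => _; rewrite ?inE //.
exact: notin_lift.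
Qed.

Lemma subF (X : {set BQ}) (a : BS) : sS \notin X -> nfa_step BA X a \subset [set sF].
Proof.
move/negbTE => sX; case: a => [T|j].
  by rewrite stepL sX /= sub0set.
by rewrite stepR; case: ifP => _; rewrite ?sub0set ?subxx.
Qed.

Lemma step0F (X : {set BQ}) (a : BS) : X \subset [set sF] -> nfa_step BA X a = set0.
Proof.
move/subsetP => XF; case: a => [T|j]; rewrite ?stepL ?stepR.
  by case: ifP => // /andP [/XF]; rewrite inE.
by case: ifP => // /XF; rewrite inE.
Qed.

Lemma fold0 w : foldl (nfa_step BA) set0 w = set0.
Proof. by elim: w => //= a w IH; rewrite step0F ?sub0set. Qed.

Lemma BH4 w : nfa_accepts BA w -> size w = 2.
Proof.
rewrite accepts_acc; case: w => [|a [|b [|c w]]] //.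
- by rewrite acc0 inE.
- rewrite acc_cons acc0; case: a => [T|j].
    by rewrite stepL; case: ifP => _; rewrite ?inE ?(negbTE (notin_lift _ _)).
  by rewrite stepR !inE.
- rewrite !acc_cons step0F ?subF ?noS // /acc fold0.
  by case/existsP => q; rewrite inE.
Qed.
End Big.

Lemma exF k c : k <= c -> c < 2 ^ k -> exists F : {set {set 'I_k}},
  [/\ forall i, [set i] \in F, set0 \notin F & #|F| = c].
Proof.
move=> kc c2.
pose S1 := [set [set i] | i : 'I_k].
have cS1 : #|S1| = k by rewrite card_imset ?card_ord //; exact: set1_inj.
pose NS := [set T : {set 'I_k} | 1 < #|T|].
have S10 : set0 \notin S1.
  by apply/imsetP => -[i _ /setP/(_ i)]; rewrite !inE eqxx.
have cNS : #|NS| + k.+1 = 2 ^ k.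
  have -> : k.+1 = #|~: NS|.
    have -> : ~: NS = set0 |: S1.
      apply/setP => T; rewrite !inE -leqNgt; apply/idP/idP.
        case e: #|T| => [|[|]] // _.
          by rewrite (cards0_eq e) eqxx.
        have /cards1P [x ->] : #|T| == 1 by rewrite e.
        by rewrite imset_f ?orbT.
      by case/orP => [/eqP ->|/imsetP [i _ ->]]; rewrite ?cards0 ?cards1.
    by rewrite cardsU1 S10 cS1.
  by rewrite cardsC -cardsT -powersetT card_powerset cardsT card_ord.
pose G := [set T in take (c - k) (enum NS)].
have cG : #|G| = c - k.
  have u : uniq (take (c - k) (enum NS)) by rewrite take_uniq ?enum_uniq.
  rewrite cardsE (card_uniqP u) size_takel // -cardE; lia.
have GNS T : T \in G -> 1 < #|T|.
  by rewrite inE => /mem_take; rewrite mem_enum inE.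
exists (S1 :|: G); split.
- by move=> i; rewrite in_setU imset_f.
- by rewrite in_setU negb_or S10 /=; apply/negP => /GNS; rewrite cards0.
- rewrite cardsU cS1 cG.
  have -> : S1 :&: G = set0.
    apply/setP => T; rewrite in_setI in_set0; apply/negP => /andP [/imsetP [i _ ->] /GNS].
    by rewrite cards1.
  rewrite cards0; lia.
Qed.

Definition A1 : nfa unit unit := Nfa tt (fun _ _ => set0) [set tt].

Lemma step1 (X : {set unit}) a : nfa_step A1 X a = set0.
Proof. by apply/setP => q; rewrite inE; apply/bigcupP => -[p _]; rewrite inE. Qed.

Lemma case1 : minimal_nfa A1 /\ infix_free (nfa_lang A1) /\ min_dfa_size (nfa_lang A1) 2.
Proof.
have [] := @pack _ _ A1 (fun _ => [::]) (fun _ => [::]) [set [set tt]; set0]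
  (fun X => if X == set0 then [:: tt] else [::]) 0.
- by case.
- move=> X []; rewrite acc_nil; apply/existsP/idP => [[[] /andP[]] //|H].
  by exists tt; rewrite H inE.
- by rewrite !inE eqxx.
- by move=> X a _; rewrite step1 !inE eqxx orbT.
- move=> X; rewrite !inE => /orP [] /eqP ->; last by rewrite eqxx /= step1.
  have -> : ([set tt] == set0) = false by apply/negP => /eqP/setP/(_ tt); rewrite !inE.
  by [].
- case => // a w; rewrite accepts_acc acc_cons step1.
  rewrite /acc; have -> : forall w, foldl (nfa_step A1) set0 w = set0 by elim => //= ? ? IH; rewrite step1.
  by case/existsP => q; rewrite inE.
move=> H1 [H2 H3]; split => //; split => //.
have -> : 2 = #|[set [set tt]; set0]|.
  rewrite cards2; have -> // : ([set tt] == set0) = false.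
  by apply/negP => /eqP/setP/(_ tt); rewrite !inE.
by [].
Qed.

Definition A2 : nfa unit bool := Nfa false (fun q _ => if q then set0 else [set true]) [set true].

Lemma step2 (X : {set bool}) a : nfa_step A2 X a = if false \in X then [set true] else set0.
Proof.
apply/setP => q; apply/bigcupP/idP => [[[] pX]|]; rewrite ?inE //=.
  by rewrite pX inE.
by case: ifP => [fX qt|]; [exists false | rewrite inE].
Qed.

Lemma case2 : minimal_nfa A2 /\ infix_free (nfa_lang A2) /\ min_dfa_size (nfa_lang A2) 3.
Proof.
have [] := @pack _ _ A2 (fun q => if q then [:: tt] else [::]) (fun q => if q then [::] else [:: tt])
  [set [set false]; [set true]; set0]
  (fun X => if false \in X then [::] else if true \in X then [:: tt] else [:: tt; tt]) 1.
- by case => //=; rewrite step2 inE.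
- move=> X [] /=; rewrite ?acc_cons ?step2 acc_nil.
    apply/existsP/idP => [[[]]|]; rewrite ?inE ?andbF ?andbT //.
    by move=> H; exists true; rewrite H inE.
  case: ifP => H; first by apply/existsP; exists true; rewrite !inE.
  by apply/existsP => -[?]; rewrite inE.
- by rewrite !inE eqxx.
- by move=> X a _; rewrite step2; case: ifP => _; rewrite !inE eqxx ?orbT.
- move=> X; rewrite !inE => /orP [/orP []|] /eqP -> /=; rewrite ?inE //= !step2 ?inE //.
- have f0 : forall w, foldl (nfa_step A2) set0 w = set0.
    by elim => //= ? ? IH; rewrite step2 inE.
  have s2 : forall a b, nfa_step A2 (nfa_step A2 [set false] a) b = set0.
    by move=> a b; rewrite (step2 [set false]) inE eqxx step2 inE.
  case => [|a [|b w]] //; rewrite accepts_acc.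
    by rewrite acc_nil; case/existsP => q; rewrite !inE => /andP [/eqP ->].
  by rewrite !acc_cons s2 /acc f0; case/existsP => q; rewrite inE.
move=> H1 [H2 H3]; split => //; split => //.
have h1 : ([set false] == [set true]) = false by apply/negP => /eqP/setP/(_ false); rewrite !inE.
have h2 : (set0 == [set false]) = false by apply/negP => /eqP/setP/(_ false); rewrite !inE.
have h3 : (set0 == [set true]) = false by apply/negP => /eqP/setP/(_ true); rewrite !inE.
have -> : 3 = #|[set [set false]; [set true]; set0]|.
  by rewrite setUC cardsU1 cards2 !inE h1 h2 h3.
by [].
Qed.

Theorem mainTheorem6 (n alpha : nat) :
  1 <= n -> n < alpha -> 4 * alpha <= 2 ^ n + 8 ->
  exists (Sigma Q : finType) (A : nfa Sigma Q),
    #|Q| = n /\ minimal_nfa A /\ infix_free (nfa_lang A) /\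
    min_dfa_size (nfa_lang A) alpha.
Proof.
case: n => [//|[|[|m]]] _ h1 h2.
- have -> : alpha = 2 by move: h2; rewrite expn1; lia.
  by exists unit, unit, A1; split; [rewrite card_unit | exact: case1].
- have -> : alpha = 3 by move: h2; rewrite expnS expn1; lia.
  by exists unit, bool, A2; split; [rewrite card_bool | exact: case2].
have [F [F1 F0 cF]] : exists F : {set {set 'I_m.+1}},
    [/\ forall i, [set i] \in F, set0 \notin F & #|F| = alpha - 3].
  apply: exF; first lia.
  move: h2; rewrite !expnS; lia.
exists ({set 'I_m.+1} + 'I_m.+1)%type, ('I_m.+1 + bool)%type, (BA F); split.
  by rewrite card_sum card_ord card_bool addn2.
have [] := @pack _ _ (BA F) (bx ord0) (by_ ord0) (BR F) (wR ord0) 2.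
- exact: bH1.
- exact: bH2.
- exact: BR1.
- by move=> X a _; exact: BR_step.
- by move=> X; apply: BR3.
- exact: BH4.
move=> H1 [H2 H3]; split => //; split => //.
have -> : alpha = #|BR F| by rewrite (card_BR F0) cF; lia.
by [].
Qed.
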